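(* Let $Q$ be an equivariantly supported quantale with base locale $Q_0$ and support $\varsigma$. Then the map $Q_0\to R(Q)$ defined by $a\mapsto a\triangleright1_Q$ is an order isomorphism whose inverse is the restriction $\varsigma:R(Q)\to Q_0$. In particular, $R(Q)$ is a locale.
   Context: For a locale $A$, an $A$-$A$-bimodule is a sup-lattice $M$ with actions $a\triangleright m$, $m\triangleleft a$ preserving joins in each variable, with $1_A\triangleright m=m$, $(a\wedge b)\triangleright m=a\triangleright(b\triangleright m)$, $m\triangleleft1_A=m$, $m\triangleleft(a\wedge b)=(m\triangleleft a)\triangleleft b$, $(a\triangleright m)\triangleleft b=a\triangleright(m\triangleleft b)$. An $A$-$A$-quantale is such a $Q$ with associative join-preserving multiplication and $(a\triangleright x)y=a\triangleright(xy)$, $(x\triangleleft a)y=x(a\triangleright y)$, $(xy)\triangleleft a=x(y\triangleleft a)$; involutive if there is a join-preserving $x\mapsto x^*$ with $x^{**}=x$, $(xy)^*=y^*x^*$, $(a\triangleright(x\triangleleft b))^*=b\triangleright(x^*\triangleleft a)$. A based quantale is an involutive $Q_0$-$Q_0$-quantale for some locale $Q_0$; $1_Q$ is its top. A support is a join-preserving $\varsigma:Q\to Q_0$ with $\varsigma(1_Q)=1_{Q_0}$, $\varsigma(x)\triangleright y\le xx^*y$, $\varsigma(x)\triangleright x=x$; equivariant if $\varsigma(a\triangleright x)=a\wedge\varsigma(x)$. An equivariantly supported quantale is a based quantale with an equivariant support. $R(Q)=\{x\in Q\mid x1_Q\le x\}$ is the set of right-sided elements. *)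

(* Defs.v *)
Set Implicit Arguments.
Unset Strict Implicit.

Definition image {X Y : Type} (f : X -> Y) (S : X -> Prop) : Y -> Prop :=
  fun y => exists x, S x /\ y = f x.

Definition is_sup_lattice {T : Type} (le : T -> T -> Prop)
  (sup : (T -> Prop) -> T) : Prop :=
  (forall x, le x x) /\
  (forall x y z, le x y -> le y z -> le x z) /\
  (forall x y, le x y -> le y x -> x = y) /\
  (forall S x, S x -> le x (sup S)) /\
  (forall S y, (forall x, S x -> le x y) -> le (sup S) y).

Definition is_locale {T : Type} (le : T -> T -> Prop)
  (sup : (T -> Prop) -> T) (meet : T -> T -> T) : Prop :=
  is_sup_lattice le sup /\
  (forall a b, le (meet a b) a) /\
  (forall a b, le (meet a b) b) /\
  (forall a b c, le c a -> le c b -> le c (meet a b)) /\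
  (forall a S, meet a (sup S) = sup (image (meet a) S)).

Record Locale := {
  Lcar :> Type;
  Lle : Lcar -> Lcar -> Prop;
  Lsup : (Lcar -> Prop) -> Lcar;
  Lmeet : Lcar -> Lcar -> Lcar;
  Lax : is_locale Lle Lsup Lmeet }.

Definition Ltop (A : Locale) : A := Lsup (fun _ => True).

(* A based quantale: an involutive A-A-quantale for the locale A = Q_0. *)
Record BasedQuantale (A : Locale) := {
  Qcar :> Type;
  Qle : Qcar -> Qcar -> Prop;
  Qsup : (Qcar -> Prop) -> Qcar;
  Qsl : is_sup_lattice Qle Qsup;
  lact : A -> Qcar -> Qcar;
  ract : Qcar -> A -> Qcar;
  mul : Qcar -> Qcar -> Qcar;
  star : Qcar -> Qcar;
  lact_supl : forall (S : A -> Prop) m,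
      lact (Lsup S) m = Qsup (image (fun a => lact a m) S);
  lact_supr : forall a (S : Qcar -> Prop),
      lact a (Qsup S) = Qsup (image (lact a) S);
  ract_supl : forall (S : Qcar -> Prop) a,
      ract (Qsup S) a = Qsup (image (fun m => ract m a) S);
  ract_supr : forall m (S : A -> Prop),
      ract m (Lsup S) = Qsup (image (ract m) S);
  lact_one : forall m, lact (Ltop A) m = m;
  lact_meet : forall a b m, lact (Lmeet a b) m = lact a (lact b m);
  ract_one : forall m, ract m (Ltop A) = m;
  ract_meet : forall a b m, ract m (Lmeet a b) = ract (ract m a) b;
  lact_ract : forall a b m, ract (lact a m) b = lact a (ract m b);
  mulA : forall x y z, mul (mul x y) z = mul x (mul y z);
  mul_supl : forall (S : Qcar -> Prop) y,
      mul (Qsup S) y = Qsup (image (fun x => mul x y) S);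
  mul_supr : forall x (S : Qcar -> Prop),
      mul x (Qsup S) = Qsup (image (mul x) S);
  mul_lact : forall a x y, mul (lact a x) y = lact a (mul x y);
  mul_ract_lact : forall a x y, mul (ract x a) y = mul x (lact a y);
  mul_ract : forall a x y, ract (mul x y) a = mul x (ract y a);
  star_sup : forall (S : Qcar -> Prop), star (Qsup S) = Qsup (image star S);
  starK : forall x, star (star x) = x;
  star_mul : forall x y, star (mul x y) = mul (star y) (star x);
  star_act : forall a b x,
      star (lact a (ract x b)) = lact b (ract (star x) a) }.

Definition Qtop (A : Locale) (Q : BasedQuantale A) : Q := Qsup (fun _ => True).

Definition is_support (A : Locale) (Q : BasedQuantale A) (s : Q -> A) : Prop :=
  (forall S : Q -> Prop, s (Qsup S) = Lsup (image s S)) /\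
  s (Qtop Q) = Ltop A /\
  (forall x y, Qle (lact (s x) y) (mul (mul x (star x)) y)) /\
  (forall x, lact (s x) x = x).

Definition is_equivariant (A : Locale) (Q : BasedQuantale A) (s : Q -> A) : Prop :=
  forall a x, s (lact a x) = Lmeet a (s x).

Definition right_sided (A : Locale) (Q : BasedQuantale A) (x : Q) : Prop :=
  Qle (mul x (Qtop Q)) x.

(* Main.v *)
Require Import Defs.
From Stdlib Require Import ProofIrrelevance FunctionalExtensionality PropExtensionality.

Lemma supmap_mono {T U : Type} {le1 : T -> T -> Prop} {sup1} {le2 : U -> U -> Prop} {sup2}
  (H1 : is_sup_lattice le1 sup1) (H2 : is_sup_lattice le2 sup2) (h : T -> U)
  (Hh : forall S, h (sup1 S) = sup2 (image h S)) x y :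
  le1 x y -> le2 (h x) (h y).
Proof.
  destruct H1 as [r1 [t1 [a1 [u1 l1]]]]. destruct H2 as [r2 [t2 [a2 [u2 l2]]]].
  intros Hxy.
  assert (E : sup1 (fun z => z = x \/ z = y) = y).
  { apply a1.
    - apply l1. intros z [->| ->]; auto.
    - apply u1. auto. }
  rewrite <- E, Hh. apply u2. exists x. auto.
Qed.

Lemma transfer_locale {T : Type} (A : Locale) (le : T -> T -> Prop)
  (f : A -> T) (g : T -> A) (gf : forall a, g (f a) = a) (fg : forall t, f (g t) = t)
  (hle : forall x y, le x y <-> Lle (g x) (g y)) :
  is_locale le (fun S => f (Lsup (image g S))) (fun x y => f (Lmeet (g x) (g y))).
Proof.
  destruct (Lax A) as [[r [t [an [u l]]]] [m1 [m2 [m3 md]]]].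
  split; [split; [|split; [|split; [|split]]]|split; [|split; [|split]]].
  - intros; apply hle; auto.
  - intros x y z H H'; apply hle; apply hle in H; apply hle in H'; eauto.
  - intros x y H H'; apply hle in H; apply hle in H'.
    rewrite <- (fg x), <- (fg y). f_equal. auto.
  - intros S x Sx. apply hle. rewrite gf. apply u. exists x; auto.
  - intros S y Hy. apply hle. rewrite gf. apply l. intros z [x [Sx ->]].
    apply hle; auto.
  - intros; apply hle; rewrite gf; auto.
  - intros; apply hle; rewrite gf; auto.
  - intros a b c H H'; apply hle; rewrite gf; apply hle in H; apply hle in H'; auto.
  - intros a S. rewrite gf, md. f_equal. f_equal.
    apply functional_extensionality; intro z. apply propositional_extensionality.
    split.
    + intros [w [[x [Sx ->]] ->]]. exists (f (Lmeet (g a) (g x))). split.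
      * exists x; auto.
      * rewrite gf; auto.
    + intros [w [[x [Sx ->]] ->]]. rewrite gf. exists (g x). split; auto.
      exists x; auto.
Qed.

Theorem corollary3p18 (A : Locale) (Q : BasedQuantale A) (s : Q -> A)
  (Hs : is_support s) (He : is_equivariant s) :
  (* a |-> a |> 1_Q maps Q_0 into R(Q) *)
  (forall a : A, right_sided (lact a (Qtop Q))) /\
  (* it is an order embedding *)
  (forall a b : A, Lle a b <-> Qle (lact a (Qtop Q)) (lact b (Qtop Q))) /\
  (* the restriction of s to R(Q) is its two-sided inverse *)
  (forall a : A, s (lact a (Qtop Q)) = a) /\
  (forall x : Q, right_sided x -> lact (s x) (Qtop Q) = x) /\
  (* in particular R(Q), with the order induced from Q, is a locale *)
  (exists (supR : ({x : Q | right_sided x} -> Prop) -> {x : Q | right_sided x})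
          (meetR : {x : Q | right_sided x} -> {x : Q | right_sided x} ->
                   {x : Q | right_sided x}),
     is_locale (fun x y => Qle (proj1_sig x) (proj1_sig y)) supR meetR).
Proof.
  destruct Hs as [ssup [stop [sax sx]]].
  pose proof (Qsl Q) as QS.
  pose proof (Lax A) as [AS [m1 [m2 [m3 md]]]].
  pose proof QS as [qr [qt [qa [qu ql]]]].
  pose proof AS as [ar [at_ [aa [au al]]]].
  assert (letop : forall x : Q, Qle x (Qtop Q)) by (intros; apply qu; exact I).
  assert (lactr : forall (a : A) (x y : Q), Qle x y -> Qle (lact a x) (lact a y)).
  { intros a. apply (supmap_mono QS QS). apply lact_supr. }
  assert (lactl : forall (x : Q) (a b : A), Lle a b -> Qle (lact a x) (lact b x)).
  { intros x. apply (supmap_mono AS QS (fun a => lact a x)). intros; apply lact_supl. }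
  assert (mulr : forall x y z : Q, Qle y z -> Qle (mul x y) (mul x z)).
  { intros x. apply (supmap_mono QS QS). apply mul_supr. }
  assert (smono : forall x y : Q, Qle x y -> Lle (s x) (s y)).
  { apply (supmap_mono QS AS). apply ssup. }
  assert (meettop : forall a : A, Lmeet a (Ltop A) = a).
  { intros a. apply aa; auto. apply m3; auto. apply au. exact I. }
  assert (H1 : forall a : A, right_sided (lact a (Qtop Q))).
  { intros a. unfold right_sided. rewrite mul_lact. apply lactr. apply letop. }
  assert (H3 : forall a : A, s (lact a (Qtop Q)) = a).
  { intros a. rewrite He, stop. apply meettop. }
  assert (H2 : forall a b : A, Lle a b <-> Qle (lact a (Qtop Q)) (lact b (Qtop Q))).
  { intros a b; split; intros H.
    - apply lactl; auto.
    - rewrite <- (H3 a), <- (H3 b). apply smono; auto. }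
  assert (H4 : forall x : Q, right_sided x -> lact (s x) (Qtop Q) = x).
  { intros x Hx. apply qa.
    - eapply qt. apply sax. rewrite mulA. eapply qt; [|exact Hx].
      apply mulr. apply letop.
    - rewrite <- (sx x) at 1. apply lactr. apply letop. }
  do 4 (split; [assumption|]).
  set (f := fun a : A => exist (fun x : Q => right_sided x) (lact a (Qtop Q)) (H1 a)).
  set (g := fun x : {x : Q | right_sided x} => s (proj1_sig x)).
  eexists. eexists.
  apply (@transfer_locale _ A _ f g).
  - intros a. unfold f, g; simpl. apply H3.
  - intros [x Hx]. unfold f, g; simpl. apply eq_sig_hprop.
    + intros; apply proof_irrelevance.
    + simpl. apply H4; auto.
  - intros [x Hx] [y Hy]. unfold g; simpl.
    rewrite (H2 (s x) (s y)), H4, H4; auto. reflexivity.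
Qed.
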